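(* Let $\Phi:\mathbf D\to\mathbf C$, $\Psi:\mathbf C\to\mathbf D$ be a deformation retract of finite-type based chain complexes $(\mathbf C,I)$, $(\mathbf D,I')$ of real inner product spaces, and fix $n$. Then the conditions (1) $\mathrm{Proj}_{\operatorname{Ker}\partial_{n+1}^\dagger}(\Phi\Psi s-s)=0$ for all $s\in\mathbf C_n$, and (2) $\mathrm{Proj}_{\operatorname{Ker}\partial_{n-1}}(\Psi^\dagger\Phi^\dagger s-s)=0$ for all $s\in\mathbf C_{n-1}$ hold if and only if the Morsification $\mathcal M$ associated to $(\Phi,\Psi)$ is $(n,n-1)$-free.
   Context: $\partial$ is the boundary of $\mathbf C$, $\dagger$ the adjoint with respect to the inner products, $\mathrm{Proj}_W$ orthogonal projection. Deformation retract: chain maps with $\Psi\Phi=\mathrm{id}_{\mathbf D}$ and $\Phi\Psi$ chain homotopic to $\mathrm{id}_{\mathbf C}$. Then $\mathbf C=\operatorname{Ker}\Psi\oplus\operatorname{Im}\Phi$ as chain complexes. Morsification: give the subcomplex $\operatorname{Ker}\Psi$ (boundary $\partial'$) the restricted inner product and choose in each degree, via singular value decompositions, orthonormal bases $\mathcal R_+(\partial'_m)$ of $\operatorname{Im}\partial_m'^\dagger$ and $\mathcal L_+(\partial'_m)$ of $\operatorname{Im}\partial'_m$ with a bijection $v\mapsto w$, $\partial'_mv=\sigma w$, $\sigma>0$, plus a basis of the kernel of its Laplacian; base $\mathbf C$ by these one-dimensional spans together with summands of $\operatorname{Im}\Phi$; the Morse matching $\mathcal M$ consists of the edges $v\to w$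 (pairing $v\in\mathbf C_m$ with $w\in\mathbf C_{m-1}$), and cells of $\operatorname{Im}\Phi$ are critical. $\mathcal M$ is $(n,n-1)$-free if it pairs no $n$-cell with an $(n-1)$-cell, i.e. $\mathcal R_+(\partial'_n)=\emptyset$. *)

(* Defs.v *)
From HB Require Import structures.
From mathcomp Require Import all_boot all_order all_algebra.
Set Implicit Arguments. Unset Strict Implicit. Unset Printing Implicit Defensive.
Import Order.TTheory GRing.Theory Num.Theory.
Local Open Scope ring_scope.

(* A finite-type based chain complex of real inner product
   spaces is given by dimensions [c : int -> nat] (C_i = 'rV_(c i), written in
   coordinates w.r.t. the orthonormal basis I, so the inner product is the
   standard dot product <x,y> = x *m y^T) and a family of matrices
   [bd i j : 'M_(c i, c j)] of which only [bd i (i-1)] is used: it is the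
   boundary ∂_i : C_i -> C_{i-1}, acting on row vectors x |-> x *m bd i (i-1).
   Adjoints w.r.t. the dot product are transposes. *)

Section Defs.
Variable R : realFieldType.

Definition is_complex (c : int -> nat) (bd : forall i j : int, 'M[R]_(c i, c j)) :=
  forall i : int, bd i (i - 1) *m bd (i - 1) (i - 1 - 1) = 0.

Definition finite_type (c : int -> nat) :=
  exists N : nat, forall i : int, (N < absz i)%N -> c i = 0%N.

Definition chain_map (a b : int -> nat)
  (bdA : forall i j : int, 'M[R]_(a i, a j)) (bdB : forall i j : int, 'M[R]_(b i, b j))
  (f : forall i : int, 'M[R]_(a i, b i)) :=
  forall i : int, f i *m bdB i (i - 1) = bdA i (i - 1) *m f (i - 1).

Definition chain_homotopic (c : int -> nat) (bd : forall i j : int, 'M[R]_(c i, c j))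
  (f g : forall i : int, 'M[R]_(c i, c i)) :=
  exists h : forall i j : int, 'M[R]_(c i, c j),
    forall i : int, f i - g i = bd i (i - 1) *m h (i - 1) i + h i (i + 1) *m bd (i + 1) i.

Definition deformation_retract (c e : int -> nat)
  (bdC : forall i j : int, 'M[R]_(c i, c j)) (bdD : forall i j : int, 'M[R]_(e i, e j))
  (Phi : forall i : int, 'M[R]_(e i, c i)) (Psi : forall i : int, 'M[R]_(c i, e i)) :=
  [/\ chain_map bdD bdC Phi, chain_map bdC bdD Psi,
      forall i : int, Phi i *m Psi i = 1%:M
    & chain_homotopic bdC (fun i => Psi i *m Phi i) (fun i => 1%:M)].

Definition projmx (m n : nat) (U : 'M[R]_(m, n)) : 'M[R]_n :=
  let B := row_base U in (B^T *m invmx (B *m B^T) *m B).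

Definition orthproj (m n : nat) (U : 'M[R]_(m, n)) (v : 'rV[R]_n) : 'rV[R]_n :=
  v *m projmx U.

(* Ker Psi_i is the row space of kermx (Psi i); the restricted
   boundary ∂'_n : Ker Psi_n -> Ker Psi_{n-1} has adjoint (w.r.t. the restricted
   inner product) y |-> Proj_{Ker Psi_n} (∂_n^† y).  R_+(∂'_n) is an orthonormal
   basis of Im ∂'_n^†, so its cardinality is the dimension of that image. *)
Definition card_Rplus (c e : int -> nat) (bdC : forall i j : int, 'M[R]_(c i, c j))
  (Psi : forall i : int, 'M[R]_(c i, e i)) (n : int) : nat :=
  \rank (kermx (Psi (n - 1)) *m (bdC n (n - 1))^T *m projmx (kermx (Psi n))).

(* the Morse matching pairs no n-cell with an (n-1)-cell: R_+(∂'_n) = ∅ *)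
Definition morse_free (c e : int -> nat) (bdC : forall i j : int, 'M[R]_(c i, c j))
  (Psi : forall i : int, 'M[R]_(c i, e i)) (n : int) : Prop :=
  card_Rplus bdC Psi n = 0%N.

End Defs.

(* Main.v *)
Require Import Defs.
From HB Require Import structures.
From mathcomp Require Import all_boot all_order all_algebra.
Import Order.TTheory GRing.Theory Num.Theory.
Local Open Scope ring_scope.

Lemma sq0 (R : realFieldType) m n (y : 'M[R]_(m, n)) : y *m y^T = 0 -> y = 0.
Proof.
move=> H; apply/matrixP => i j.
have := congr1 (fun M : 'M[R]_m => M i i) H; rewrite !mxE => Hs.
move: Hs; rewrite (eq_bigr (fun k => y i k ^+ 2)); last by move=> k _; rewrite mxE expr2.
move=> Hs.
have := psumr_eq0P (fun k _ => sqr_ge0 (y i k)) Hs (i := j) isT.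
by move/eqP; rewrite sqrf_eq0 => /eqP.
Qed.

Lemma projmx0 (R : realFieldType) p n m (U : 'M[R]_(p, n)) (M : 'M[R]_(m, n)) :
  (M *m projmx U = 0) <-> (M *m U^T = 0).
Proof.
rewrite /projmx.
set B := row_base U. set G := B *m B^T.
have Bf := row_base_free U.
have Gu : G \in unitmx.
  rewrite -row_free_unit /row_free.
  have K0 : kermx G = 0.
    have : kermx G *m B = 0 *m B.
      rewrite mul0mx; apply: sq0.
      by rewrite trmx_mul mulmxA -(mulmxA _ B) -/G mulmx_ker mul0mx.
    exact: (row_free_inj Bf).
  have := mxrank_ker G; rewrite K0 mxrank0 => /eqP.
  rewrite eq_sym subn_eq0 => h1.
  by rewrite eqn_leq rank_leq_row h1.
have UB : (U <= B)%MS by rewrite eq_row_base submx_refl.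
have BU : (B <= U)%MS by rewrite eq_row_base submx_refl.
have E : (M *m B^T = 0) <-> (M *m U^T = 0).
  split=> H.
    by rewrite -(mulmxKpV UB) trmx_mul mulmxA H mul0mx.
  by rewrite -(mulmxKpV BU) trmx_mul mulmxA H mul0mx.
split=> H.
  apply/E.
  have H1 : M *m B^T *m invmx G *m B = 0 *m B by rewrite mul0mx -H !mulmxA.
  have H2 := row_free_inj Bf H1.
  by rewrite -(mulmxKV Gu (M *m B^T)) H2 mul0mx.
by move/E: H => H; rewrite !mulmxA H !mul0mx.
Qed.

Theorem mainTheorem10 (R : realFieldType) (c e : int -> nat)
  (bdC : forall i j : int, 'M[R]_(c i, c j)) (bdD : forall i j : int, 'M[R]_(e i, e j))
  (Phi : forall i : int, 'M[R]_(e i, c i)) (Psi : forall i : int, 'M[R]_(c i, e i))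
  (n : int) :
  is_complex bdC -> is_complex bdD -> finite_type c -> finite_type e ->
  deformation_retract bdC bdD Phi Psi ->
  ((forall s : 'rV[R]_(c n),
       orthproj (kermx (bdC (n + 1) n)^T) (s *m Psi n *m Phi n - s) = 0) /\
   (forall s : 'rV[R]_(c (n - 1)),
       orthproj (kermx (bdC (n - 1) (n - 1 - 1)))
                (s *m (Phi (n - 1))^T *m (Psi (n - 1))^T - s) = 0))
  <-> morse_free bdC Psi n.
Proof.
move=> cxC cxD _ _ [cPhi cPsi PP [h Hh]].
have Pmorph m (x : 'M_(m, c n)) : x *m Psi n *m Phi n *m bdC n (n-1)
     = x *m bdC n (n-1) *m Psi (n-1) *m Phi (n-1).
  by rewrite -!mulmxA cPhi (mulmxA (Psi n)) cPsi !mulmxA.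
have PsiK m (x : 'M_(m, c n)) : x *m Psi n = 0 -> x *m bdC n (n-1) *m Psi (n-1) = 0.
  by move=> H; rewrite -mulmxA -cPsi mulmxA H mul0mx.
have xP i m (x : 'M_(m, c i)) : (x *m Psi i *m Phi i - x) *m Psi i = 0.
  by rewrite mulmxBl -!mulmxA PP mulmx1 subrr.
split.
- case=> _ H2.
  set K' := kermx (bdC (n-1) (n-1-1)).
  have M0 : ((Phi (n-1))^T *m (Psi (n-1))^T - 1%:M) *m K'^T = 0.
    apply/row_matrixP => i; rewrite row0 -[X in row i X]mul1mx row_mul.
    have := H2 (row i 1%:M); rewrite /orthproj => /projmx0.
    by rewrite mulmxA mulmxBr mulmx1 !mulmxA.
  have KP : K' *m (Psi (n-1) *m Phi (n-1)) = K'.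
    rewrite mulmxBl mul1mx -!mulmxA -!trmx_mul in M0.
    move/eqP: M0; rewrite subr_eq0 => /eqP /(congr1 trmx); rewrite !trmxK.
    by rewrite -mulmxA.
  set X := kermx (Psi n) *m bdC n (n-1).
  have XK : (X <= K')%MS by apply/sub_kermxP; rewrite -mulmxA cxC mulmx0.
  have X0 : X = 0.
    have e1 : X *m (Psi (n-1) *m Phi (n-1)) = X.
      by rewrite -{1}(mulmxKpV XK) -mulmxA KP (mulmxKpV XK).
    by rewrite -e1 mulmxA PsiK ?mul0mx // mulmx_ker.
  rewrite /morse_free /card_Rplus; apply/eqP; rewrite mxrank_eq0; apply/eqP.
  apply/projmx0.
  have : (X *m (kermx (Psi (n-1)))^T)^T = 0 by rewrite X0 mul0mx trmx0.
  by rewrite !trmx_mul !trmxK mulmxA.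
- move=> Hm.
  have X0 : kermx (Psi n) *m bdC n (n-1) = 0.
    move: Hm; rewrite /morse_free /card_Rplus => /eqP; rewrite mxrank_eq0 => /eqP /projmx0 H.
    set X := kermx (Psi n) *m bdC n (n-1).
    have XK : (X <= kermx (Psi (n-1)))%MS by apply/sub_kermxP; rewrite PsiK // mulmx_ker.
    apply: sq0.
    rewrite -{2}(mulmxKpV XK) trmx_mul mulmxA.
    have : (kermx (Psi (n - 1)) *m (bdC n (n - 1))^T *m (kermx (Psi n))^T)^T = 0
      by rewrite H trmx0.
    by rewrite !trmx_mul !trmxK mulmxA => ->; rewrite mul0mx.
  have KF m (x : 'M_(m, c n)) : x *m Psi n = 0 -> x *m bdC n (n-1) = 0.
    by move/sub_kermxP => xk; rewrite -(mulmxKpV xk) -(mulmxA _ (kermx (Psi n))) X0 mulmx0.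
  split.
  + move=> s; apply/projmx0.
    set x := s *m Psi n *m Phi n - s.
    have xP0 : x *m Psi n = 0 by exact: xP.
    have eq1 : x *m (Psi n *m Phi n - 1%:M) = - x
      by rewrite mulmxBr mulmx1 mulmxA xP0 mul0mx sub0r.
    have Hn := Hh n; rewrite /= in Hn.
    rewrite Hn mulmxDr mulmxA (KF _ _ xP0) mul0mx add0r in eq1.
    rewrite -[x]opprK -eq1 mulNmx -!mulmxA.
    have : (kermx ((bdC (n+1) n)^T) *m (bdC (n+1) n)^T)^T = 0 by rewrite mulmx_ker trmx0.
    by rewrite trmx_mul trmxK => ->; rewrite !mulmx0 ?oppr0.
  + move=> s; apply/projmx0.
    set K' := kermx (bdC (n-1) (n-1-1)).
    have KP : K' *m (Psi (n-1) *m Phi (n-1)) = K'.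
      set a := K' - K' *m (Psi (n-1) *m Phi (n-1)).
      have aP : a *m Psi (n-1) = 0.
        by rewrite /a mulmxBl -!mulmxA PP mulmx1 subrr.
      have abd : a *m bdC (n-1) (n-1-1) = 0.
        rewrite /a mulmxBl mulmx_ker sub0r -!mulmxA cPhi (mulmxA (Psi (n-1))) cPsi.
        by rewrite !mulmxA mulmx_ker !mul0mx ?oppr0.
      have Hh1 := Hh (n-1); rewrite /= (subrK 1 n) in Hh1.
      have eq1 : a *m (Psi (n-1) *m Phi (n-1) - 1%:M) = - a
        by rewrite mulmxBr mulmx1 mulmxA aP mul0mx sub0r.
      rewrite Hh1 mulmxDr mulmxA abd mul0mx add0r mulmxA in eq1.
      set z := a *m h (n-1) n in eq1.
      have h2 := KF _ _ (xP n _ z).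
      rewrite mulmxBl Pmorph eq1 !mulNmx aP mul0mx oppr0 sub0r opprK in h2.
      have a0 : a = 0 by exact: h2.  
      by apply/eqP; rewrite eq_sym -subr_eq0 -/a a0.
    rewrite mulmxBl -!mulmxA -!trmx_mul -mulmxA KP subrr.
    done.
Qed.
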